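(* Let $G$ be a group acting properly by isometries on a metric space $X$ and let $H\le G$. Suppose there exist a map $\phi\colon G\to G$, a constant $\theta\ge0$ and a point $x\in X$ such that (CQ1) for all $u,v\in G$, if $\phi(u)H=\phi(v)H$ then $d(\phi(u)x,\phi(v)x)\le\theta$; and (CQ2) for all $u\in G$, $d(ux,\phi(u)x)\le\theta$. Then $\omega_G=\omega_{G/H}$.
   Context: Proper means $B_G(x,r)=\{g\in G: d(x,gx)\le r\}$ is finite for all $x,r$. For $o\in X$: $\omega_G=\limsup_{r\to\infty}\frac1r\log|B_G(o,r)|$ and $\omega_{G/H}=\limsup_{r\to\infty}\frac1r\log|\mathcal L(B_G(o,r))|$, where $\mathcal L\colon G\to G/H$ is the natural map to left cosets; these do not depend on $o$. *)

(* Defs.v *)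
From HB Require Import structures.
From mathcomp Require Import all_boot all_order all_algebra.
From mathcomp Require Import all_classical all_reals all_analysis.
Set Implicit Arguments. Unset Strict Implicit. Unset Printing Implicit Defensive.
Import Order.TTheory GRing.Theory Num.Theory numFieldTopology.Exports numFieldNormedType.Exports.
Local Open Scope classical_set_scope.
Local Open Scope ring_scope.

Record group_on (G : Type) := GroupOn {
  gmul : G -> G -> G;
  gone : G;
  ginv : G -> G;
  gmulA : forall a b c, gmul a (gmul b c) = gmul (gmul a b) c;
  gmul1 : forall a, gmul gone a = a;
  gmulV : forall a, gmul (ginv a) a = gone }.

Record metric_on (R : realType) (X : Type) := MetricOn {
  dist : X -> X -> R;
  dist_eq0 : forall x y, dist x y = 0 <-> x = y;
  dist_sym : forall x y, dist x y = dist y x;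
  dist_tri : forall x y z, dist x z <= dist x y + dist y z }.

Definition isometric_action (R : realType) (G X : Type) (g : group_on G)
    (m : metric_on R X) (act : G -> X -> X) : Prop :=
  (forall x, act (gone g) x = x) /\
  (forall a b x, act (gmul g a b) x = act a (act b x)) /\
  (forall a x y, dist m (act a x) (act a y) = dist m x y).

Definition ball_G (R : realType) (G X : Type) (m : metric_on R X)
    (act : G -> X -> X) (x : X) (r : R) : set G :=
  [set a | dist m x (act a x) <= r].

Definition proper_action (R : realType) (G X : Type) (m : metric_on R X)
    (act : G -> X -> X) : Prop :=
  forall x r, finite_set (ball_G m act x r).

Definition is_subgroup (G : Type) (g : group_on G) (H : set G) : Prop :=
  H (gone g) /\ (forall a b, H a -> H b -> H (gmul g a b)) /\
  (forall a, H a -> H (ginv g a)).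

Definition lcoset (G : Type) (g : group_on G) (H : set G) (a : G) : set G :=
  [set y | exists2 h, H h & y = gmul g a h].

Definition coset_image (G : Type) (g : group_on G) (H : set G) (A : set G)
    : set (set G) := lcoset g H @` A.

(* number of elements of a finite set (0 by convention for infinite sets) *)
Definition ncard (T : Type) (A : set T) : nat :=
  match pselect (finite_set A) with
  | left _ => xget 0%N [set n | A #= `I_n]%card
  | right _ => 0%N
  end.

Definition growth_rate (R : realType) (T : Type) (A : R -> set T) : \bar R :=
  limf_esup (fun r : R => ((ln (ncard (A r))%:R) / r)%:E) (pinfty_nbhs R).

Definition omega_G (R : realType) (G X : Type) (m : metric_on R X)
    (act : G -> X -> X) (o : X) : \bar R :=
  growth_rate (fun r => ball_G m act o r).

Definition omega_GH (R : realType) (G X : Type) (g : group_on G)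
    (m : metric_on R X) (act : G -> X -> X) (H : set G) (o : X) : \bar R :=
  growth_rate (fun r => coset_image g H (ball_G m act o r)).

(* Main.v *)
Require Import Defs.
From HB Require Import structures.
From mathcomp Require Import all_boot all_order all_algebra.
From mathcomp Require Import all_classical all_reals all_analysis.
From mathcomp Require Import ring lra.
Import Order.TTheory GRing.Theory Num.Theory numFieldTopology.Exports numFieldNormedType.Exports.
Local Open Scope classical_set_scope.
Local Open Scope ring_scope.

Lemma ncardP {T : Type} {A : set T} : finite_set A -> (A #= `I_(ncard A))%card.
Proof.
move=> fA; rewrite /ncard; case: pselect => // _.
case: fA => n An; exact: (@xgetPex nat 0%N [set n | (A #= `I_n)%card] (ex_intro _ n An)).
Qed.

Lemma ncard_le {T U : Type} {A : set T} {B : set U} :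
  finite_set B -> (A #<= B)%card -> (ncard A <= ncard B)%N.
Proof.
move=> fB AB; have fA := card_le_finite AB fB.
rewrite -card_le_II -(card_le_eql (ncardP fA)) -(card_le_eqr (ncardP fB)).
exact: AB.
Qed.

Lemma ncard_gt0 {T : Type} {A : set T} a : finite_set A -> A a -> (0 < ncard A)%N.
Proof.
move=> fA Aa; rewrite lt0n; apply/negP => /eqP h.
have := ncardP fA; rewrite h II0 card_eq0 => /eqP A0.
by rewrite A0 in Aa.
Qed.

Lemma ncard_fset {T : choiceType} {A : set T} :
  finite_set A -> ncard A = size (finmap.enum_fset (fset_set A)).
Proof. by move=> fA; apply/esym/card_fset_set/ncardP. Qed.

Lemma ncardX {U V : choiceType} {I : set U} {J : set V} :
  finite_set I -> finite_set J -> (ncard (I `*` J) <= ncard I * ncard J)%N.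
Proof.
move=> fI fJ; have fIJ := finite_setX fI fJ.
rewrite !ncard_fset // -(size_allpairs pair).
apply: uniq_leq_size; first exact: finmap.fset_uniq.
move=> [u v]; rewrite in_fset_set // => /set_mem [/= Iu Jv].
apply: allpairs_f; by rewrite in_fset_set //; apply: mem_set.
Qed.

Lemma ncard_prod (T U V : choiceType) (A : set T) (I : set U) (J : set V)
  (F1 : T -> U) (F2 : T -> V) :
  finite_set I -> finite_set J ->
  (forall a, A a -> I (F1 a) /\ J (F2 a)) ->
  (forall a b, A a -> A b -> F1 a = F1 b -> F2 a = F2 b -> a = b) ->
  (ncard A <= ncard I * ncard J)%N.
Proof.
move=> fI fJ FIJ Finj.
apply: (leq_trans _ (ncardX fI fJ)).
apply: ncard_le; first exact: finite_setX.
have e : ([set (F1 a, F2 a) | a in A] #= A)%card.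
  apply: inj_card_eq => a b /set_mem Aa /set_mem Ab [] h1 h2; exact: Finj.
rewrite -(card_le_eql e); apply: subset_card_le.
by move=> _ [a Aa <-]; have [] := FIJ a Aa.
Qed.

Lemma limsup_shift (R : realType) (f g : R -> R) (c k : R) :
  0 <= k -> (forall r, 0 < r -> f r <= c + g (r + k)) ->
  (limf_esup (fun r : R => (f r / r)%:E) (pinfty_nbhs R) <=
   limf_esup (fun r : R => (g r / r)%:E) (pinfty_nbhs R))%E.
Proof.
move=> k0 fg.
have key : forall y : R,
    (limf_esup (fun r : R => (g r / r)%:E) (pinfty_nbhs R) < y%:E)%E ->
    (limf_esup (fun r : R => (f r / r)%:E) (pinfty_nbhs R) <= y%:E)%E.
  move=> y; rewrite limf_esupE => /ereal_inf_lt [z [V [M [_ MV]] <-]] supy.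
  apply/lee_addgt0Pr => e e0.
  set N := Num.max M 0 + `|c + y * k| / e.
  rewrite limf_esupE.
  apply: le_trans; first apply: ereal_inf_lbound.
    exists [set r | N < r] => //; exists N; split => //; exact: num_real.
  apply: ge_ereal_sup => _ [r Nr <-].
  rewrite -EFinD lee_fin.
  have h1 : 0 <= `|c + y * k| / e by rewrite divr_ge0 // ltW.
  have hM : M <= Num.max M 0 by rewrite le_max lexx.
  have h0 : 0 <= Num.max M 0 by rewrite le_max lexx orbT.
  have Nr' : N < r := Nr.
  have r0 : 0 < r by rewrite /N in Nr'; lra.
  have Mr : M < r + k by rewrite /N in Nr'; lra.
  have rk0 : 0 < r + k by lra.
  have hg : g (r + k) / (r + k) < y.
    rewrite -lte_fin; apply: le_lt_trans supy.
    by apply: ereal_sup_ubound; exists (r + k) => //; apply: MV.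
  rewrite ltr_pdivrMr // in hg.
  have hc : `|c + y * k| < r * e.
    rewrite -ltr_pdivrMr //; rewrite /N in Nr'; lra.
  have hn := ler_norm (c + y * k).
  have := fg r r0.
  rewrite ler_pdivrMr //; nra.
move: key; case: (limf_esup (fun r : R => (g r / r)%:E) _) => [l| |] key.
- apply/lee_addgt0Pr => e e0; apply: key; rewrite lte_fin; lra.
- exact: leey.
- move: key; case: (limf_esup (fun r : R => (f r / r)%:E) _) => [l| |] key //.
  + have := key (l - 1)%R (ltNyr _); rewrite lee_fin => h; exfalso; lra.
  + by have := key 0%R (ltNyr _).
Qed.

Theorem mainTheorem7 (R : realType) (G X : Type) (g : group_on G)
    (m : metric_on R X) (act : G -> X -> X)
    (Hact : isometric_action g m act) (Hprop : proper_action m act)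
    (H : set G) (HH : is_subgroup g H)
    (phi : G -> G) (theta : R) (x : X) (Htheta : 0 <= theta)
    (CQ1 : forall u v, lcoset g H (phi u) = lcoset g H (phi v) ->
             dist m (act (phi u) x) (act (phi v) x) <= theta)
    (CQ2 : forall u, dist m (act u x) (act (phi u) x) <= theta) :
  forall o : X, omega_G m act o = omega_GH g m act H o.
Proof.
move=> o.
have [act1 [actM actD]] := Hact.
have mulgVr : forall a, gmul g a (ginv g a) = gone g.
  move=> a.
  have e1 : gmul g (ginv g a) (gmul g a (ginv g a)) = ginv g a.
    by rewrite gmulA gmulV gmul1.
  by rewrite -{1}(gmul1 g (gmul g a (ginv g a))) -(gmulV g (ginv g a)) -gmulA e1 gmulV.
have cancel1 : forall a u, gmul g a (gmul g (ginv g a) u) = u.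
  by move=> a u; rewrite gmulA mulgVr gmul1.
have dsym := dist_sym m.
have tri := dist_tri m.
have dinv : forall a u y, dist m y (act (gmul g (ginv g a) u) y) = dist m (act a y) (act u y).
  move=> a u y; rewrite -(actD a) actM -actM mulgVr act1 //.
have dself : forall p, dist m p p = 0 by move=> p; apply/(dist_eq0 m).
have ball_shift : forall p q r r', r + 2 * dist m p q <= r' ->
    ball_G m act p r `<=` ball_G m act q r'.
  move=> p q r r' hr u; rewrite /ball_G /= => hu.
  have h1 := tri q p (act u q).
  have h2 := tri p (act u p) (act u q).
  have h3 := actD u p q.
  have h4 := dsym q p.
  lra.
have one_in : forall p r, 0 <= r -> ball_G m act p r (gone g).
  by move=> p r r0; rewrite /ball_G /= act1 dself.
have fB : forall p r, finite_set (ball_G m act p r) by move=> p r; exact: Hprop.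
have fL : forall p r, finite_set (coset_image g H (ball_G m act p r)).
  by move=> p r; apply: finite_image.
have count : forall s, (ncard (ball_G m act x s) <=
    ncard (coset_image g H (ball_G m act x (s + theta))) *
    ncard (ball_G m act x (3 * theta)))%N.
  move=> s.
  set A := ball_G m act x s.
  have [rep hrep] := @choice (set G) G (fun c y =>
      (exists u, A u /\ lcoset g H (phi u) = c) -> A y /\ lcoset g H (phi y) = c)
    (fun c => match pselect (exists u, A u /\ lcoset g H (phi u) = c) with
              | left (ex_intro u hu) => ex_intro _ u (fun _ => hu)
              | right hn => ex_intro _ (gone g) (fun h => False_ind _ (hn h))
              end).
  apply: (@ncard_prod {classic G} {classic (set G)} {classic G} A _ _
     (fun u => lcoset g H (phi u))
     (fun u => gmul g (ginv g (rep (lcoset g H (phi u)))) u)).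
  - exact: fL.
  - exact: fB.
  - move=> a Aa; split.
      exists (phi a) => //; rewrite /ball_G /=.
      have h1 := tri x (act a x) (act (phi a) x).
      have h2 := CQ2 a.
      move: Aa; rewrite /A /ball_G /= => Aa; lra.
    have [Ar hr] := hrep (lcoset g H (phi a)) (ex_intro _ a (conj Aa erefl)).
    rewrite /ball_G /= dinv.
    have h1 := tri (act (rep (lcoset g H (phi a))) x)
                 (act (phi (rep (lcoset g H (phi a)))) x) (act a x).
    have h2 := tri (act (phi (rep (lcoset g H (phi a)))) x) (act (phi a) x) (act a x).
    have h3 := CQ1 _ _ hr.
    have h4 := CQ2 (rep (lcoset g H (phi a))).
    have h5 := CQ2 a.
    have h6 := dsym (act a x) (act (phi a) x).
    lra.
  - move=> a b Aa Ab /= e1; rewrite e1 => e2.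
    by rewrite -(cancel1 (rep (lcoset g H (phi b))) a) e2 cancel1.
set D1 := dist m o x.
set D2 := dist m x o.
set k := 2 * D1 + theta + 2 * D2.
have k0 : 0 <= k.
  have := dself o; have := tri o x o; rewrite /k /D1 /D2; lra.
have nB0 : forall p r, 0 <= r -> (0 < ncard (ball_G m act p r))%N.
  by move=> p r r0; exact: (ncard_gt0 _ (fB p r) (one_in p r r0)).
have nL0 : forall p r, 0 <= r -> (0 < ncard (coset_image g H (ball_G m act p r)))%N.
  move=> p r r0; apply: (ncard_gt0 _ (fL p r)).
  by exists (gone g); [apply: one_in|].
have imle : forall p r, (ncard (coset_image g H (ball_G m act p r)) <=
                          ncard (ball_G m act p r))%N.
  by move=> p r; apply: ncard_le => //; apply: card_image_le.
have big : forall r, (ncard (ball_G m act o r) <=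
    ncard (coset_image g H (ball_G m act o (r + k))) *
    ncard (ball_G m act x (3 * theta)))%N.
  move=> r.
  apply: (leq_trans (n := ncard (ball_G m act x (r + 2 * D1)))).
    by apply: ncard_le => //; apply: subset_card_le; apply: ball_shift; rewrite /D1.
  apply: (leq_trans (count _)).
  rewrite leq_mul2r; apply/orP; right.
  apply: ncard_le => //; apply: subset_card_le; apply: image_subset.
  apply: ball_shift; rewrite /k /D2; lra.
rewrite /omega_G /omega_GH /growth_rate.
apply/eqP; rewrite eq_le; apply/andP; split.
- apply: (@limsup_shift R (fun r => ln (ncard (ball_G m act o r))%:R)
     (fun r => ln (ncard (coset_image g H (ball_G m act o r)))%:R)
     (ln (ncard (ball_G m act x (3 * theta)))%:R) k k0) => r r0 /=.
  have r0' : 0 <= r by lra.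
  have rk : 0 <= r + k by lra.
  have t0 : 0 <= 3 * theta by lra.
  rewrite -lnM ?posrE ?ltr0n ?nB0 ?nL0 //.
  rewrite ler_ln ?posrE ?ltr0n ?nB0 ?muln_gt0 ?nL0 //; last first.
    by rewrite -natrM ltr0n muln_gt0 nB0 ?nL0.
  by rewrite -natrM ler_nat mulnC big.
- apply: (@limsup_shift R (fun r => ln (ncard (coset_image g H (ball_G m act o r)))%:R)
     (fun r => ln (ncard (ball_G m act o r))%:R) 0 0 (lexx _)) => r r0 /=.
  have r0' : 0 <= r by lra.
  rewrite add0r addr0 ler_ln ?posrE ?ltr0n ?nB0 ?nL0 //.
  by rewrite ler_nat imle.
Qed.
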